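(* Let $G$ be a graph with no isolated vertices and let $S\subseteq V(G)$. If $N[v]\subseteq S$ for some vertex $v$, then $S$ is not a ZIr-set. Equivalently, if $S$ is a ZIr-set of $G$, then $V(G)\setminus S$ is a dominating set of $G$.
   Context: $N[v]=N(v)\cup\{v\}$ is the closed neighborhood. A dominating set is a set $D$ such that every vertex is in $D$ or adjacent to a vertex of $D$. A nonempty $F\subseteq V(G)$ is a fort if every $v\notin F$ satisfies $|N(v)\cap F|\ne1$. For $S\subseteq V(G)$, $x\in S$, a private fort of $x$ relative to $S$ is a fort $F$ with $S\cap F=\{x\}$. $S$ is a ZIr-set if every element of $S$ has a private fort relative to $S$. *)

(* Defs.v *)
From mathcomp Require Import all_boot.
Set Implicit Arguments. Unset Strict Implicit. Unset Printing Implicit Defensive.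

Definition simple_graph (T : finType) (e : rel T) : Prop :=
  symmetric e /\ irreflexive e.

Definition no_isolated (T : finType) (e : rel T) : Prop :=
  forall v : T, exists u : T, e v u.

Definition nbhd (T : finType) (e : rel T) (v : T) : {set T} := [set u | e v u].
Definition cnbhd (T : finType) (e : rel T) (v : T) : {set T} := v |: nbhd e v.

Definition dominating (T : finType) (e : rel T) (D : {set T}) : Prop :=
  forall v : T, v \in D \/ exists2 u, u \in D & e v u.

Definition fort (T : finType) (e : rel T) (F : {set T}) : Prop :=
  F != set0 /\ forall v : T, v \notin F -> #|nbhd e v :&: F| != 1.

Definition private_fort (T : finType) (e : rel T) (S : {set T}) (x : T) (F : {set T}) : Prop :=
  fort e F /\ S :&: F = [set x].

Definition ZIr_set (T : finType) (e : rel T) (S : {set T}) : Prop :=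
  forall x, x \in S -> exists F, private_fort e S x F.

(* Main.v *)
Require Import Defs.
From mathcomp Require Import all_boot.

Lemma part1 (T : finType) (e : rel T) (S : {set T}) :
  simple_graph e -> no_isolated e ->
  (exists v : T, cnbhd e v \subset S) -> ~ ZIr_set e S.
Proof.
move=> [esym eirr] noiso [v sub] Z.
have [u euv] := noiso v.
have uS : u \in S by apply: (subsetP sub); rewrite /cnbhd !inE euv orbT.
have [F [[_ Hf] SF]] := Z u uS.
have vS : v \in S by apply: (subsetP sub); rewrite /cnbhd !inE eqxx.
have vu : v != u by apply/eqP => vu; rewrite vu eirr in euv.
have vF : v \notin F.
  apply/negP => vF.
  have : v \in S :&: F by rewrite inE vS vF.
  by rewrite SF inE (negbTE vu).
have := Hf v vF.
suff -> : nbhd e v :&: F = [set u] by rewrite cards1.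
apply/setP => w; rewrite !inE.
apply/andP/eqP.
- move=> [ew wF].
  have wS : w \in S by apply: (subsetP sub); rewrite /cnbhd !inE ew orbT.
  have : w \in S :&: F by rewrite inE wS wF.
  by rewrite SF inE => /eqP.
- move=> ->; split => //.
  have : u \in S :&: F by rewrite SF inE.
  by rewrite inE => /andP [].
Qed.

Theorem lemma2p8 (T : finType) (e : rel T) (S : {set T}) :
  simple_graph e -> no_isolated e ->
  ((exists v : T, cnbhd e v \subset S) -> ~ ZIr_set e S) /\
  (ZIr_set e S -> dominating e (~: S)).
Proof.
move=> sg ni; split; first exact: part1.
move=> Z v.
case vS: (v \in S); last by left; rewrite inE vS.
right.
case: (boolP [exists u, e v u && (u \notin S)]).
  by move=> /existsP [u /andP [evu uS]]; exists u => //; rewrite inE.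
move=> /existsPn H; exfalso.
suff Hs : exists v, cnbhd e v \subset S by case: (@part1 T e S sg ni Hs).
exists v.
apply/subsetP => w; rewrite /cnbhd !inE => /orP [/eqP -> //| ew].
by have := H w; rewrite ew /= negbK.
Qed.
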